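(* Let $\bar{G}$ be a finite subgroup of $\mathrm{Aut}(\mathbb{P}^2)$ with $\bar{G}\cong\mathrm{S}_4$ or $\bar{G}\cong\mathrm{A}_4$. Then either there is a $\bar{G}$-invariant point in $\mathbb{P}^2$, or there is at most one $\bar{G}$-orbit in $\mathbb{P}^2$ of length $3$. *)

(* Defs.v *)
From HB Require Import structures.
From mathcomp Require Import all_boot all_order all_algebra all_fingroup all_solvable.
From mathcomp Require Import complex.
From mathcomp Require Import Rstruct.
From Stdlib Require Import Reals.

Set Implicit Arguments.
Unset Strict Implicit.
Unset Printing Implicit Defensive.

Import GRing.Theory.
Local Open Scope ring_scope.

Definition C : Type := complex Rdefinitions.R.

(* Vectors of C^3 (row vectors); a point of P^2 is the class of a nonzero
   vector under proportionality. *)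
Definition proj_eq (u v : 'rV[C]_3) : Prop := exists c : C, c != 0 /\ v = c *: u.

Definition normalize (v : 'rV[C]_3) : 'rV[C]_3 :=
  if [pick i : 'I_3 | v 0 i != 0] is Some i then (v 0 i)^-1 *: v else v.

(* The orbit of the point [v] under the projective action of G given by
   g . [v] = [v *m rho g], as a duplicate-free list of normalized representatives. *)
Definition porbit (gT : finGroupType) (G : {group gT}) (rho : gT -> 'M[C]_3)
  (v : 'rV[C]_3) : seq 'rV[C]_3 :=
  undup [seq normalize (v *m rho g) | g <- enum G].

Definition porbit_len (gT : finGroupType) (G : {group gT}) (rho : gT -> 'M[C]_3)
  (v : 'rV[C]_3) : nat := size (porbit G rho v).

(* Main.v *)
Require Import Defs.
From HB Require Import structures.
From mathcomp Require Import all_boot all_order all_algebra all_fingroup all_solvable.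
From mathcomp Require Import complex.
From mathcomp Require Import Rstruct.

Import GRing.Theory.
Local Open Scope ring_scope.

Module Aux.
Set Implicit Arguments. Unset Strict Implicit. Unset Printing Implicit Defensive.
Import GRing.Theory Num.Theory.
Section Grp.
Local Open Scope group_scope.
Definition o0 : 'I_4 := @Ordinal 4 0 isT.
Definition o1 : 'I_4 := @Ordinal 4 1 isT.
Definition o2 : 'I_4 := @Ordinal 4 2 isT.
Definition o3 : 'I_4 := @Ordinal 4 3 isT.
Definition s1 : {perm 'I_4} := tperm o0 o1 * tperm o2 o3.
Definition s2 : {perm 'I_4} := tperm o0 o2 * tperm o1 o3.
Definition s3 : {perm 'I_4} := tperm o0 o3 * tperm o1 o2.

Lemma ord4P (x : 'I_4) : [\/ x = o0, x = o1, x = o2 | x = o3].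
Proof.
case: x => [[|[|[|[|//]]]] Hi];
 [apply: Or41|apply: Or42|apply: Or43|apply: Or44]; exact: val_inj.
Qed.

Ltac evp := rewrite ?permM !permE /=.

Lemma s1E x : s1 x = nth o0 [:: o1; o0; o3; o2] x.
Proof. by case: (ord4P x) => ->; rewrite /s1; evp. Qed.
Lemma s2E x : s2 x = nth o0 [:: o2; o3; o0; o1] x.
Proof. by case: (ord4P x) => ->; rewrite /s2; evp. Qed.
Lemma s3E x : s3 x = nth o0 [:: o3; o2; o1; o0] x.
Proof. by case: (ord4P x) => ->; rewrite /s3; evp. Qed.

Lemma s12 : s1 * s2 = s3.
Proof. by apply/permP => x; rewrite permM !s1E !s2E !s3E; case: (ord4P x) => ->. Qed.
Lemma s21 : s2 * s1 = s3.
Proof. by apply/permP => x; rewrite permM !s1E !s2E !s3E; case: (ord4P x) => ->. Qed.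
Lemma s11 : s1 * s1 = 1.
Proof. by apply/permP => x; rewrite permM !s1E perm1; case: (ord4P x) => ->. Qed.
Lemma s22 : s2 * s2 = 1.
Proof. by apply/permP => x; rewrite permM !s2E perm1; case: (ord4P x) => ->. Qed.
Lemma s1n1 : s1 != 1.
Proof. by apply/eqP => /permP /(_ o0); rewrite s1E perm1. Qed.
Lemma s2n1 : s2 != 1.
Proof. by apply/eqP => /permP /(_ o0); rewrite s2E perm1. Qed.
Lemma s12n : s1 != s2.
Proof. by apply/eqP => /permP /(_ o0); rewrite s1E s2E. Qed.

Lemma s_alt : (s1 \in 'Alt_('I_4)) && (s2 \in 'Alt_('I_4)) && (s3 \in 'Alt_('I_4)).
Proof. by rewrite !Alt_even !odd_permM !odd_tperm. Qed.

Lemma fpf_char (x : {perm 'I_4}) : x * x = 1 -> (forall i, x i != i) ->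
  x \in [:: s1; s2; s3].
Proof.
move=> xx fx.
have xi : forall i, x (x i) = i by move=> i; rewrite -permM xx perm1.
have hinj : forall i j, x i = x j -> i = j by move=> i j h; rewrite -(xi i) h xi.
have fin : forall (s : {perm 'I_4}) a b c d,
   x o0 = a -> x o1 = b -> x o2 = c -> x o3 = d ->
   s o0 = a -> s o1 = b -> s o2 = c -> s o3 = d -> x = s.
  move=> s a b c d h0 h1 h2 h3 e0 e1 e2 e3; apply/permP => i.
  by case: (ord4P i) => ->; rewrite ?h0 ?h1 ?h2 ?h3 ?e0 ?e1 ?e2 ?e3.
have ne : forall i j : 'I_4, val i != val j -> i != j.
  by move=> i j; apply: contra => /eqP ->.
have F : forall i j, x i = j -> val i == val j -> False.
  by move=> i j h /eqP/val_inj e; move: (fx i); rewrite h e eqxx.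
have I : forall i j k, x i = k -> x j = k -> val i != val j -> False.
  by move=> i j k hi hj; rewrite (hinj i j (etrans hi (esym hj))) eqxx.
case: (ord4P (x o0)) => h0; first by exfalso; exact: (F _ _ h0 isT).
- have h1 : x o1 = o0 by rewrite -h0 xi.
  have h2 : x o2 = o3.
    case: (ord4P (x o2)) => h //; exfalso;
    [exact: (I _ _ _ h h1 isT)|exact: (I _ _ _ h h0 isT)|exact: (F _ _ h isT)].
  have h3 : x o3 = o2 by rewrite -h2 xi.
  by rewrite (fin s1 _ _ _ _ h0 h1 h2 h3) ?inE ?eqxx ?orbT ?s1E.
- have h1 : x o2 = o0 by rewrite -h0 xi.
  have h2 : x o1 = o3.
    case: (ord4P (x o1)) => h //; exfalso;
    [exact: (I _ _ _ h h1 isT)|exact: (F _ _ h isT)|exact: (I _ _ _ h h0 isT)].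
  have h3 : x o3 = o1 by rewrite -h2 xi.
  by rewrite (fin s2 _ _ _ _ h0 h2 h1 h3) ?inE ?eqxx ?orbT ?s2E.
- have h1 : x o3 = o0 by rewrite -h0 xi.
  have h2 : x o1 = o2.
    case: (ord4P (x o1)) => h //; exfalso;
    [exact: (I _ _ _ h h1 isT)|exact: (F _ _ h isT)|exact: (I _ _ _ h h0 isT)].
  have h3 : x o2 = o1 by rewrite -h2 xi.
  by rewrite (fin s3 _ _ _ _ h0 h2 h3 h1) ?inE ?eqxx ?orbT ?s3E.
Qed.

Lemma conj_s (s x : {perm 'I_4}) : x \in [:: s1; s2; s3] -> s^-1 * x * s \in [:: s1; s2; s3].
Proof.
move=> hx.
have [xx fx] : x * x = 1 /\ forall i, x i != i.
  move: hx; rewrite !inE => /or3P [] /eqP ->; split.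
  - exact: s11.
  - by move=> i; rewrite s1E; case: (ord4P i) => ->.
  - exact: s22.
  - by move=> i; rewrite s2E; case: (ord4P i) => ->.
  - by apply/permP => i; rewrite permM !s3E perm1; case: (ord4P i) => ->.
  - by move=> i; rewrite s3E; case: (ord4P i) => ->.
apply: fpf_char.
  by rewrite -!mulgA mulKVg (mulgA x) xx mul1g mulVg.
move=> i; rewrite !permM; apply: contra (fx (s^-1 i)) => /eqP h.
by apply/eqP; apply: (@perm_inj _ s); rewrite h -permM mulVg perm1.
Qed.

Lemma klein_from (H : {group {perm 'I_4}}) gT (G : {group gT}) :
  s1 \in H -> s2 \in H -> H \isog G ->
  exists a b : gT, [/\ a \in G, b \in G, a != 1, b != 1 & a != b] /\
   [/\ a * a = 1, b * b = 1 & a * b = b * a] /\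
   (forall g, g \in G -> forall k, k \in [:: a; b; a * b] -> g^-1 * k * g \in [:: a; b; a * b]).
Proof.
move=> h1 h2 /isogP [f injf fH].
have h3 : s3 \in H by rewrite -s12 groupM.
exists (f s1), (f s2); split; [|split].
- by rewrite -fH !mem_morphim // !morph_injm_eq1 // s1n1 s2n1 (inj_in_eq (injmP injf)) // s12n.
- by rewrite -!morphM // s11 s22 s12 s21 morph1.
move=> g; rewrite -fH => /morphimP [s sD _ ->] k.
have -> : [:: f s1; f s2; f s1 * f s2] = map f [:: s1; s2; s3] by rewrite /= -morphM // s12.
have hl : forall x, x \in [:: s1; s2; s3] -> x \in H.
  by move=> x; rewrite !inE => /or3P [] /eqP ->.
move=> /mapP [x hx ->].
have xH := hl x hx.
rewrite -morphV // -!morphM ?groupM ?groupV //.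
exact: map_f (conj_s s hx).
Qed.

Lemma klein gT (G : {group gT}) :
  (G \isog 'Sym_('I_4)) \/ (G \isog 'Alt_('I_4)) ->
  exists a b : gT, [/\ a \in G, b \in G, a != 1, b != 1 & a != b] /\
   [/\ a * a = 1, b * b = 1 & a * b = b * a] /\
   (forall g, g \in G -> forall k, k \in [:: a; b; a * b] -> g^-1 * k * g \in [:: a; b; a * b]).
Proof.
case=> h.
  by apply: klein_from; [exact: in_setT | exact: in_setT | rewrite isog_sym].
have := s_alt; case/andP => /andP [a1 a2] _.
by apply: klein_from; [exact: a1 | exact: a2 | rewrite isog_sym].
Qed.

End Grp.

Section LA.
Variable F : numFieldType.

Lemma dep4 (v : 'I_4 -> 'rV[F]_3) :
  exists c : 'I_4 -> F, (exists k, c k != 0) /\ \sum_i c i *: v i = 0.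
Proof.
pose M : 'M[F]_(4,3) := \matrix_i v i.
have hr : (0 < \rank (kermx M))%N.
  by rewrite mxrank_ker subn_gt0; apply: leq_ltn_trans (rank_leq_col M) _.
have : kermx M != 0 by rewrite -mxrank_eq0 -lt0n.
have [i hi|] := pickP (fun i => row i (kermx M) != 0); last first.
  move=> h; case/eqP; apply/row_matrixP => i; rewrite row0.
  by move: (h i) => /= /negbFE /eqP.
move=> _; set r := row i (kermx M) in hi.
exists (fun j => r 0 j); split.
  have [j hj|h] := pickP (fun j => r 0 j != 0); first by exists j; exact: hj.
  case/eqP: hi; apply/rowP => j.
  by move: (h j) => /= /negbFE /eqP ->; rewrite mxE.
have : r *m M = 0 by rewrite /r -row_mul mulmx_ker row0.
by rewrite mulmx_sum_row; under eq_bigr do rewrite rowK.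
Qed.

Lemma elimk (v : 'I_4 -> 'rV[F]_3) (c d : 'I_4 -> F) (M : 'M[F]_3) k :
  \sum_i c i *: v i = 0 -> (forall i, v i *m M = d i *: v i) ->
  (forall i, i != k -> d i = 0) -> d k != 0 -> v k != 0 -> c k = 0.
Proof.
move=> hs hM hd dk vk.
have : \sum_i (c i * d i) *: v i = 0.
  have := congr1 (mulmx^~ M) hs; rewrite /= mul0mx mulmx_suml => e; rewrite -[RHS]e.
  by apply: eq_bigr => i _; rewrite -scalemxAl hM scalerA.
rewrite (bigD1 k) //= big1 ?addr0; last by move=> i /hd ->; rewrite mulr0 scale0r.
by move/eqP; rewrite scaler_eq0 (negbTE vk) orbF mulf_eq0 (negbTE dk) orbF => /eqP.
Qed.


Lemma zid (V : zmodType) (x y z w : V) : x + y - z - w + (x - y + z - w) = (x - w) + (x - w).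
Proof. by rewrite addrACA [x + y - z + _]addrACA addNr addr0 [x + y + _]addrACA subrr addr0 [RHS]addrACA. Qed.
Lemma zid2 (V : zmodType) (B b c : V) : (B + b) - (B + c) = b - c.
Proof. by rewrite opprD addrACA subrr add0r. Qed.
Definition Pm (A B : 'M[F]_3) x y := (A + x%:M) *m (B + y%:M).

Lemma PmE A B x y : Pm A B x y = A *m B + y *: A + x *: B + (x*y)%:M.
Proof.
by rewrite /Pm mulmxDl !mulmxDr mul_mx_scalar !mul_scalar_mx scale_scalar_mx !addrA.
Qed.

Lemma projE A B (u : 'rV[F]_3) a b x y : u *m A = a *: u -> u *m B = b *: u ->
  u *m Pm A B x y = ((a+x)*(b+y)) *: u.
Proof.
move=> hA hB; rewrite /Pm mulmxA [u *m (A + _)]mulmxDr mul_mx_scalar hA -scalerDl.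
by rewrite -scalemxAl mulmxDr mul_mx_scalar hB -scalerDl scalerA.
Qed.

Lemma PmA A B x y : A *m B = B *m A -> A *m A = (x^+2)%:M ->
  Pm A B x y *m A = x *: Pm A B x y.
Proof.
move=> hc hA.
have e1 : (B + y%:M) *m A = A *m (B + y%:M).
  by rewrite mulmxDl mulmxDr -hc mul_scalar_mx mul_mx_scalar.
have e2 : (A + x%:M) *m A = x *: (A + x%:M).
  by rewrite mulmxDl hA mul_scalar_mx scalerDr scale_scalar_mx expr2 addrC.
by rewrite /Pm -mulmxA e1 mulmxA e2 -scalemxAl.
Qed.

Lemma PmB A B x y : B *m B = (y^+2)%:M ->
  Pm A B x y *m B = y *: Pm A B x y.
Proof.
move=> hB.
have e2 : (B + y%:M) *m B = y *: (B + y%:M).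
  by rewrite mulmxDl hB mul_scalar_mx scalerDr scale_scalar_mx expr2 addrC.
by rewrite /Pm -mulmxA e2 -scalemxAr.
Qed.

Lemma smxN (x : F) : (-x)%:M = - (x%:M : 'M[F]_3).
Proof. by apply/matrixP => i j; rewrite !mxE mulNrn. Qed.
Lemma smxB (x y : F) : (x%:M : 'M[F]_3) - y%:M = (x - y)%:M.
Proof. by apply/matrixP => i j; rewrite !mxE mulrnBl. Qed.
Lemma ident1 A B a b : Pm A B (-a) b - Pm A B (-a) (-b) = (b *+ 2) *: (A - a%:M).
Proof. by rewrite /Pm -mulmxBr zid2 smxB opprK -mulr2n mul_mx_scalar smxN. Qed.
Lemma ident2 A B a b : Pm A B a (-b) - Pm A B (-a) (-b) = (a *+ 2) *: (B - b%:M).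
Proof. by rewrite /Pm -mulmxBl zid2 smxB opprK -mulr2n mul_scalar_mx smxN. Qed.
Lemma ident3 A B a b : Pm A B (-a) b + Pm A B a (-b) = 2%:R *: (A *m B - (a*b)%:M).
Proof. by rewrite !PmE !scaleNr mulNr mulrN smxN scaler_nat mulr2n zid. Qed.

Lemma sum4 (V : zmodType) (f : 'I_4 -> V) : \sum_i f i = f o0 + f o1 + f o2 + f o3.
Proof.
rewrite !big_ord_recl big_ord0 addr0 !addrA.
by congr (_ + _ + _ + _); congr f; apply: val_inj.
Qed.


Lemma K1core A B (p q w w' : 'rV[F]_3) a b x y x' y' :
  p != 0 -> q != 0 -> w != 0 -> w' != 0 ->
  p *m A = a *: p -> p *m B = b *: p -> q *m A = a *: q -> q *m B = b *: q ->
  w *m A = x *: w -> w *m B = y *: w -> w' *m A = x' *: w' -> w' *m B = y' *: w' ->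
  (a + x) * (b + y) = 0 -> (x' + x) * (y' + y) = 0 -> (x + x) * (y + y) != 0 ->
  (a + x') * (b + y') = 0 -> (x + x') * (y + y') = 0 -> (x' + x') * (y' + y') != 0 ->
  exists c, q = c *: p.
Proof.
move=> p0 q0 w0 w'0 pA pB qA qB wA wB w'A w'B k1 k2 k3 k4 k5 k6.
pose v : 'I_4 -> 'rV[F]_3 := fun i => nth 0 [:: p; q; w; w'] i.
pose al : 'I_4 -> F := fun i => nth 0 [:: a; a; x; x'] i.
pose be : 'I_4 -> F := fun i => nth 0 [:: b; b; y; y'] i.
have hvA : forall i, v i *m A = al i *: v i by move=> i; case: (ord4P i) => ->.
have hvB : forall i, v i *m B = be i *: v i by move=> i; case: (ord4P i) => ->.
have [c [[k ck] hs]] := dep4 v.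
have c2 : c o2 = 0.
  apply: (@elimk v c (fun i => (al i + x) * (be i + y)) (Pm A B x y) o2 hs) => //.
  - by move=> i; apply: projE.
  - by move=> i; case: (ord4P i) => ->.
have c3 : c o3 = 0.
  apply: (@elimk v c (fun i => (al i + x') * (be i + y')) (Pm A B x' y') o3 hs) => //.
  - by move=> i; apply: projE.
  - by move=> i; case: (ord4P i) => ->.
rewrite sum4 c2 c3 !scale0r !addr0 /v /= in hs.
have c1 : c o1 != 0.
  apply/negP => /eqP c1; move: hs; rewrite c1 scale0r addr0 => /eqP.
  rewrite scaler_eq0 (negbTE p0) orbF => /eqP c0.
  by move: ck; case: (ord4P k) => ->; rewrite ?c0 ?c1 ?c2 ?c3 eqxx.
exists (- (c o0) / c o1).
have e : c o1 *: q = - (c o0 *: p) by apply/eqP; rewrite -addr_eq0 addrC hs.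
rewrite -[q]scale1r -(mulVf c1) -scalerA e scalerN -scaleNr scalerA.
by rewrite !mulNr mulrC.
Qed.


Lemma nz2 (z : F) : z != 0 -> z + z != 0.
Proof. by move=> h; rewrite -mulr2n mulrn_eq0 negb_or h. Qed.

Lemma imgvec A B x y : A *m B = B *m A -> A *m A = (x^+2)%:M -> B *m B = (y^+2)%:M ->
  Pm A B x y != 0 -> exists w : 'rV[F]_3, [/\ w != 0, w *m A = x *: w & w *m B = y *: w].
Proof.
move=> hc hA hB hP.
have [i hi|h] := pickP (fun i => row i (Pm A B x y) != 0); last first.
  case/eqP: hP; apply/row_matrixP => i; rewrite row0.
  by move: (h i) => /= /negbFE /eqP.
exists (row i (Pm A B x y)); split; first exact: hi.
  by rewrite -row_mul PmA // !rowE; exact: (esym (scalemxAr _ _ _)).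
by rewrite -row_mul PmB // !rowE; exact: (esym (scalemxAr _ _ _)).
Qed.

Lemma K1 A B (p q : 'rV[F]_3) a b :
  A *m B = B *m A -> A *m A = (a^+2)%:M -> B *m B = (b^+2)%:M -> a != 0 -> b != 0 ->
  (forall c, A != c%:M) -> (forall c, B != c%:M) -> (forall c, A *m B != c%:M) ->
  p != 0 -> q != 0 ->
  p *m A = a *: p -> p *m B = b *: p -> q *m A = a *: q -> q *m B = b *: q ->
  exists c, q = c *: p.
Proof.
move=> hc hA hB a0 b0 nA nB nAB p0 q0 pA pB qA qB.
have hA' : A *m A = ((-a)^+2)%:M by rewrite sqrrN.
have hB' : B *m B = ((-b)^+2)%:M by rewrite sqrrN.
have hnA : Pm A B (-a) b != 0 \/ Pm A B (-a) (-b) != 0.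
  case: (eqVneq (Pm A B (-a) b) 0) => h1; [right|by left].
  apply/eqP => h3; have := ident1 A B a b; rewrite h1 h3 subrr => /esym/eqP.
  rewrite scaler_eq0 mulrn_eq0 /= (negbTE b0) /= subr_eq0 => /eqP hh.
  by move/eqP: (nA a).
have hnB : Pm A B a (-b) != 0 \/ Pm A B (-a) (-b) != 0.
  case: (eqVneq (Pm A B a (-b)) 0) => h1; [right|by left].
  apply/eqP => h3; have := ident2 A B a b; rewrite h1 h3 subrr => /esym/eqP.
  rewrite scaler_eq0 mulrn_eq0 /= (negbTE a0) /= subr_eq0 => /eqP hh.
  by move/eqP: (nB b).
have hnAB : Pm A B (-a) b != 0 \/ Pm A B a (-b) != 0.
  case: (eqVneq (Pm A B (-a) b) 0) => h1; [right|by left].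
  apply/eqP => h3; have := ident3 A B a b; rewrite h1 h3 addr0 => /esym/eqP.
  rewrite scaler_eq0 pnatr_eq0 /= subr_eq0 => /eqP hh.
  by move/eqP: (nAB (a * b)).
have oa : - a != 0 by rewrite oppr_eq0.
have ob : - b != 0 by rewrite oppr_eq0.
case: (eqVneq (Pm A B (-a) b) 0) => h1.
  have h2 : Pm A B a (-b) != 0 by case: hnAB => //; rewrite h1 eqxx.
  have h3 : Pm A B (-a) (-b) != 0 by case: hnA => //; rewrite h1 eqxx.
  have [w [w0 wA wB]] := imgvec hc hA hB' h2.
  have [w' [w'0 w'A w'B]] := imgvec hc hA' hB' h3.
  apply: (K1core p0 q0 w0 w'0 pA pB qA qB wA wB w'A w'B);
   rewrite ?(subrr, addNr, addrN, mul0r, mulr0) //; by rewrite mulf_neq0 // nz2.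
have [w [w0 wA wB]] := imgvec hc hA' hB h1.
case: (eqVneq (Pm A B a (-b)) 0) => h2.
  have h3 : Pm A B (-a) (-b) != 0 by case: hnB => //; rewrite h2 eqxx.
  have [w' [w'0 w'A w'B]] := imgvec hc hA' hB' h3.
  apply: (K1core p0 q0 w0 w'0 pA pB qA qB wA wB w'A w'B);
   rewrite ?(subrr, addNr, addrN, mul0r, mulr0) //; by rewrite mulf_neq0 // nz2.
have [w' [w'0 w'A w'B]] := imgvec hc hA hB' h2.
apply: (K1core p0 q0 w0 w'0 pA pB qA qB wA wB w'A w'B);
 rewrite ?(subrr, addNr, addrN, mul0r, mulr0) //; by rewrite mulf_neq0 // nz2.
Qed.


Lemma eig_nz A (u : 'rV[F]_3) a : A \in unitmx -> u != 0 -> u *m A = a *: u -> a != 0.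
Proof.
move=> uA u0 e; apply/eqP => a0; case/eqP: u0.
by rewrite -(mulmxK uA u) e a0 scale0r mul0mx.
Qed.

Lemma eigsq A (u : 'rV[F]_3) a s : u != 0 -> u *m A = a *: u -> A *m A = s%:M ->
  A *m A = (a^+2)%:M.
Proof.
move=> u0 e hs; rewrite hs; congr (_%:M).
have := congr1 (mulmx u) hs; rewrite mulmxA e -scalemxAl e scalerA mul_mx_scalar.
move/eqP; rewrite -subr_eq0 -scalerBl scaler_eq0 (negbTE u0) orbF subr_eq0.
by rewrite expr2 => /eqP.
Qed.

Lemma sq_opp (x y : F) : x^+2 = y^+2 -> x != y -> x + y = 0.
Proof.
move=> /eqP; rewrite eqf_sqr => /orP [/eqP -> |/eqP ->]; first by rewrite eqxx.
by rewrite addNr.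
Qed.

Lemma smx_inj (x y : F) : (x%:M : 'M[F]_3) = y%:M -> x = y.
Proof. by move/matrixP/(_ ord0 ord0); rewrite !mxE eqxx !mulr1n. Qed.

Lemma LAmain A B (u : 'I_4 -> 'rV[F]_3) (a b : 'I_4 -> F) :
  A \in unitmx -> B \in unitmx ->
  (exists s, A *m A = s%:M) -> (exists t, B *m B = t%:M) ->
  (exists c, A *m B = c *: (B *m A)) ->
  (forall c, A != c%:M) -> (forall c, B != c%:M) -> (forall c, A *m B != c%:M) ->
  (forall i, u i != 0) -> (forall i, u i *m A = a i *: u i) -> (forall i, u i *m B = b i *: u i) ->
  exists i j, i != j /\ exists c, u j = c *: u i.
Proof.
move=> uA uB [s hs] [t ht] [c hc] nA nB nAB u0 hA hB.
have a0 i : a i != 0 := eig_nz uA (u0 i) (hA i).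
have b0 i : b i != 0 := eig_nz uB (u0 i) (hB i).
have sA i : A *m A = (a i ^+ 2)%:M := eigsq (u0 i) (hA i) hs.
have sB i : B *m B = (b i ^+ 2)%:M := eigsq (u0 i) (hB i) ht.
have hc' : A *m B = B *m A.
  have := congr1 (mulmx (u o0)) hc.
  rewrite -scalemxAr !mulmxA hA hB -!scalemxAl hA hB !scalerA => /eqP.
  rewrite -subr_eq0 -scalerBl scaler_eq0 (negbTE (u0 o0)) orbF subr_eq0.
  rewrite -mulrA [b o0 * a o0]mulrC => /eqP e.
  have c1 : c = 1.
    apply: (mulIf (mulf_neq0 (a0 o0) (b0 o0))); by rewrite mul1r -e.
  by rewrite hc c1 scale1r.
have sqa i j : a i ^+ 2 = a j ^+ 2.
  by apply: smx_inj; rewrite -(sA i) -(sA j).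
have sqb i j : b i ^+ 2 = b j ^+ 2.
  by apply: smx_inj; rewrite -(sB i) -(sB j).
case: (pickP (fun ij : 'I_4 * 'I_4 => [&& ij.1 != ij.2, a ij.1 == a ij.2 & b ij.1 == b ij.2])).
  case=> i j /= /and3P [hij /eqP ea /eqP eb].
  exists i, j; split => //.
  apply: (K1 hc' (sA i) (sB i) (a0 i) (b0 i) nA nB nAB (u0 i) (u0 j) (hA i) (hB i)).
    by rewrite ea hA.
  by rewrite eb hB.
move=> none; exfalso.
have [cc [[k ck] hsum]] := dep4 u.
suff : cc k = 0 by move/eqP; rewrite (negbTE ck).
apply: (@elimk u cc (fun i => (a i + a k) * (b i + b k)) (Pm A B (a k) (b k)) k hsum) => //.
- by move=> i; apply: projE.
- move=> i ik; move: (none (i, k)) => /=; rewrite ik /=.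
  case: (eqVneq (a i) (a k)) => [_ /= /negbT hb|ha _].
    by rewrite (sq_opp (sqb i k) hb) mulr0.
  by rewrite (sq_opp (sqa i k) ha) mul0r.
- by rewrite mulf_neq0 // nz2.
Qed.

End LA.

Lemma pe_refl (u : 'rV[C]_3) : proj_eq u u.
Proof. by exists 1; rewrite oner_eq0 scale1r. Qed.
Lemma pe_sym (u v : 'rV[C]_3) : proj_eq u v -> proj_eq v u.
Proof.
case=> c [c0 ->]; exists c^-1; split; first by rewrite invr_eq0.
by rewrite scalerA mulVf // scale1r.
Qed.
Lemma pe_trans (u v w : 'rV[C]_3) : proj_eq u v -> proj_eq v w -> proj_eq u w.
Proof.
case=> c [c0 ->] [d [d0 ->]]; exists (d * c); split; first by rewrite mulf_neq0.
by rewrite scalerA.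
Qed.
Lemma pe_scale (u : 'rV[C]_3) c : c != 0 -> proj_eq u (c *: u).
Proof. by move=> c0; exists c. Qed.
Lemma pe_mulmx (u v : 'rV[C]_3) M : proj_eq u v -> proj_eq (u *m M) (v *m M).
Proof. by case=> c [c0 ->]; exists c; split => //; rewrite -scalemxAl. Qed.
Lemma pe_mx (u : 'rV[C]_3) M N c : c != 0 -> M = c *: N -> proj_eq (u *m N) (u *m M).
Proof. by move=> c0 ->; exists c; split => //; rewrite scalemxAr. Qed.
Lemma pe_nz (u v : 'rV[C]_3) : proj_eq u v -> u != 0 -> v != 0.
Proof. by case=> c [c0 ->] u0; rewrite scaler_eq0 negb_or c0. Qed.

Lemma norm_pe (u : 'rV[C]_3) : u != 0 -> proj_eq u (normalize u).
Proof.
move=> u0; rewrite /normalize; case: pickP => [i hi|h].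
  by apply: pe_scale; rewrite invr_eq0.
case/eqP: u0; apply/rowP => j.
by move: (h j) => /= /negbFE /eqP ->; rewrite mxE.
Qed.

Lemma pe_norm (u v : 'rV[C]_3) : proj_eq u v -> normalize u = normalize v.
Proof.
case=> c [c0 ->]; rewrite /normalize.
have e : (fun i : 'I_3 => (c *: u) 0 i != 0) =1 (fun i => u 0 i != 0).
  by move=> i; rewrite mxE mulf_eq0 (negbTE c0).
rewrite (eq_pick e); case: pickP => [i hi|h]; last first.
  have -> : u = 0.
    by apply/rowP => j; move: (h j) => /= /negbFE /eqP ->; rewrite mxE.
  by rewrite scaler0.
by rewrite mxE scalerA invfM mulrAC mulVf // mul1r.
Qed.

Lemma norm_norm (u : 'rV[C]_3) : u != 0 -> normalize (normalize u) = normalize u.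
Proof. by move=> u0; symmetry; apply: pe_norm; exact: norm_pe. Qed.
Lemma norm_nz (u : 'rV[C]_3) : u != 0 -> normalize u != 0.
Proof. by move=> u0; apply: pe_nz (norm_pe u0) u0. Qed.
Lemma norm_eq_pe (u v : 'rV[C]_3) : u != 0 -> v != 0 -> normalize u = normalize v -> proj_eq u v.
Proof.
move=> u0 v0 e; apply: pe_trans (norm_pe u0) _; rewrite e.
exact: pe_sym (norm_pe v0).
Qed.

Lemma inv_fix (T : eqType) (s : seq T) (f : T -> T) : uniq s -> size s = 3 ->
  {in s, forall x, f x \in s} -> {in s, forall x, f (f x) = x} ->
  exists2 x, x \in s & f x = x.
Proof.
move=> us ss fs ff.
have finj : {in s &, injective f} by move=> x y xs ys e; rewrite -(ff x xs) e ff.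
case: s us ss fs ff finj => [|x1 [|x2 [|x3 [|]]]] //= us _ fs ff finj.
move: us; rewrite !inE negb_or andbT => /andP [/andP [n12 n13] n23].
have m1 : x1 \in [:: x1; x2; x3] by rewrite !inE eqxx.
have m2 : x2 \in [:: x1; x2; x3] by rewrite !inE eqxx orbT.
have m3 : x3 \in [:: x1; x2; x3] by rewrite !inE eqxx !orbT.
have := fs x1 m1; rewrite !inE => /or3P [] /eqP e1.
- by exists x1.
- have e2 : f x2 = x1 by rewrite -e1 ff.
  have := fs x3 m3; rewrite !inE => /or3P [] /eqP e3.
  + by move: n23; rewrite (finj x3 x2 m3 m2 (etrans e3 (esym e2))) eqxx.
  + by move: n13; rewrite (finj x3 x1 m3 m1 (etrans e3 (esym e1))) eqxx.
  + by exists x3.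
- have e3 : f x3 = x1 by rewrite -e1 ff.
  have := fs x2 m2; rewrite !inE => /or3P [] /eqP e2.
  + by move: n23; rewrite (finj x2 x3 m2 m3 (etrans e2 (esym e3))) eqxx.
  + by exists x2.
  + by move: n12; rewrite (finj x2 x1 m2 m1 (etrans e2 (esym e1))) eqxx.
Qed.

Lemma fix3 (T : eqType) (s : seq T) (f g : T -> T) : uniq s -> size s = 3 ->
  {in s, forall x, f x \in s} -> {in s, forall x, f (f x) = x} ->
  {in s, forall x, g x \in s} -> {in s, forall x, g (g x) = x} ->
  {in s, forall x, f (g x) = g (f x)} ->
  exists2 x, x \in s & f x = x /\ g x = x.
Proof.
move=> us ss fs ff gs gg fg.
have finj : {in s &, injective f} by move=> x y xs ys e; rewrite -(ff x xs) e ff.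
have [x xs fx] := inv_fix us ss fs ff.
have fy : f (g x) = g x by rewrite fg // fx.
case: (eqVneq (g x) x) => gx; first by exists x.
have allf : {in s, forall z, f z = z}.
  move=> z zs; apply/eqP/negPn/negP => fz.
  have zx : z != x by apply: contraNneq fz => ->; rewrite fx.
  have zy : z != g x by apply: contraNneq fz => ->; rewrite fy.
  have fzx : f z != x by apply: contraNneq zx => e; apply/eqP; apply: finj => //; rewrite e fx.
  have fzy : f z != g x by apply: contraNneq zy => e; apply/eqP; apply: finj => //; rewrite ?gs // e fy.
  have : (size [:: x; g x; z; f z] <= size s)%N.
    apply: uniq_leq_size.
      rewrite /= !inE !negb_or eq_sym gx eq_sym zx eq_sym fzx eq_sym zy eq_sym fzy.
      by rewrite eq_sym fz.
    by move=> w; rewrite !inE => /or4P [] /eqP ->; rewrite ?gs ?fs.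
  by rewrite ss.
have [w ws gw] := inv_fix us ss gs gg.
by exists w => //; split => //; apply: allf.
Qed.

Section Proj.
Variables (gT : finGroupType) (G : {group gT}) (rho : gT -> 'M[C]_3).
Hypothesis rho_unit : forall g, g \in G -> rho g \in unitmx.
Hypothesis rho_mul : forall g h, g \in G -> h \in G ->
     exists c : C, c != 0 /\ rho (g * h)%g = c *: (rho g *m rho h).

Lemma rho1 : exists c : C, c != 0 /\ rho 1%g = c%:M.
Proof.
have [c [c0 e]] := rho_mul (group1 G) (group1 G); rewrite mulg1 in e.
have u1 := rho_unit (group1 G).
exists c^-1; split; first by rewrite invr_eq0.
have := congr1 (mulmx^~ (invmx (rho 1%g))) e.
rewrite /= mulmxV // -scalemxAl mulmxK // => h.
by rewrite -[rho 1%g]scale1r -(mulVf c0) -scalerA -h scale_scalar_mx mulr1.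
Qed.

Lemma pe_rho1 (u : 'rV[C]_3) : proj_eq u (u *m rho 1%g).
Proof. by have [c [c0 ->]] := rho1; rewrite mul_mx_scalar; exact: pe_scale. Qed.

Lemma pe_rhoM (u : 'rV[C]_3) g h : g \in G -> h \in G ->
  proj_eq (u *m rho g *m rho h) (u *m rho (g * h)%g).
Proof. by move=> gG hG; have [c [c0 e]] := rho_mul gG hG; rewrite -mulmxA; exact: pe_mx c0 e. Qed.

Lemma rho_nz (u : 'rV[C]_3) g : g \in G -> u != 0 -> u *m rho g != 0.
Proof.
move=> gG u0; apply: contraNneq u0 => h; apply/eqP.
by rewrite -(mulmxK (rho_unit gG) u) h mul0mx.
Qed.

Lemma mem_porbit (v x : 'rV[C]_3) : x \in Defs.porbit G rho v <-> exists2 g, g \in G & x = normalize (v *m rho g).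
Proof.
rewrite mem_undup; split => [/mapP [g]|[g gG ->]]; first by rewrite mem_enum => gG ->; exists g.
by apply: map_f; rewrite mem_enum.
Qed.

Lemma norm_act (v : 'rV[C]_3) g k : g \in G -> k \in G -> v != 0 ->
  normalize (normalize (v *m rho g) *m rho k) = normalize (v *m rho (g * k)%g).
Proof.
move=> gG kG v0; apply: pe_norm.
apply: pe_trans (pe_rhoM v gG kG).
by apply: pe_mulmx; apply: pe_sym; apply: norm_pe; exact: rho_nz.
Qed.

Definition Fx (u : 'rV[C]_3) k := proj_eq u (u *m rho k).

Lemma Fx_pe (u u' : 'rV[C]_3) k : proj_eq u u' -> Fx u k -> Fx u' k.
Proof. by move=> e f; apply: pe_trans (pe_sym e) _; apply: pe_trans f _; exact: pe_mulmx. Qed.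

Lemma Fx_mul (u : 'rV[C]_3) a b : a \in G -> b \in G -> Fx u a -> Fx u b -> Fx u (a * b)%g.
Proof.
move=> aG bG fa fb; apply: pe_trans fb _; apply: pe_trans (pe_mulmx (rho b) fa) _.
exact: pe_rhoM.
Qed.

Lemma Fx_conj (v : 'rV[C]_3) g0 g k k' : g0 \in G -> g \in G -> k \in G -> k' \in G ->
  (g0 * k' * (g0^-1 * g) = g * k)%g ->
  Fx (v *m rho g0) k' -> Fx (v *m rho g) k.
Proof.
move=> g0G gG kG k'G e f.
have hG : (g0^-1 * g)%g \in G by rewrite groupM ?groupV.
have e1 : proj_eq (v *m rho g0 *m rho (g0^-1 * g)%g) (v *m rho g).
  by have := pe_rhoM v g0G hG; rewrite mulKVg.
apply: pe_trans (pe_sym e1) _.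
apply: pe_trans (pe_mulmx (rho (g0^-1 * g)%g) f) _.
apply: pe_trans (pe_mulmx _ (pe_rhoM v g0G k'G)) _.
apply: pe_trans (pe_rhoM _ (groupM g0G k'G) hG) _.
rewrite e; exact: pe_sym (pe_rhoM v gG kG).
Qed.

Lemma orbit3_fixed (v : 'rV[C]_3) a b :
  v != 0 -> porbit_len G rho v = 3%N ->
  a \in G -> b \in G -> (a * a = 1)%g -> (b * b = 1)%g -> (a * b = b * a)%g ->
  (forall g, g \in G -> forall k, k \in [:: a; b; (a * b)%g] -> (g^-1 * k * g)%g \in [:: a; b; (a * b)%g]) ->
  forall g, g \in G -> Fx (v *m rho g) a /\ Fx (v *m rho g) b.
Proof.
move=> v0 hlen aG bG aa bb ab nrm.
set S := Defs.porbit G rho v.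
have us : uniq S by exact: undup_uniq.
pose f x := normalize (x *m rho a).
pose f' x := normalize (x *m rho b).
have act_in : forall k x, k \in G -> x \in S -> normalize (x *m rho k) \in S.
  move=> k x kG /mem_porbit [g gG ->]; apply/mem_porbit.
  by exists (g * k)%g; rewrite ?groupM // (norm_act gG kG v0).
have fs : {in S, forall x, f x \in S} by move=> x xs; exact: act_in.
have f's : {in S, forall x, f' x \in S} by move=> x xs; exact: act_in.
have ff : {in S, forall x, f (f x) = x}.
  move=> x /mem_porbit [g gG ->]; rewrite /f /= (norm_act gG aG v0) (norm_act (groupM gG aG) aG v0).
  by rewrite -mulgA aa mulg1.
have ff' : {in S, forall x, f' (f' x) = x}.
  move=> x /mem_porbit [g gG ->]; rewrite /f' /= (norm_act gG bG v0) (norm_act (groupM gG bG) bG v0).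
  by rewrite -mulgA bb mulg1.
have fg : {in S, forall x, f (f' x) = f' (f x)}.
  move=> x /mem_porbit [g gG ->]; rewrite /f /f' /= (norm_act gG bG v0) (norm_act (groupM gG bG) aG v0)
    (norm_act gG aG v0) (norm_act (groupM gG aG) bG v0).
  by rewrite -!mulgA ab.
have [x0 x0s [fx0 f'x0]] := fix3 us hlen fs ff f's ff' fg.
case/mem_porbit: x0s => g0 g0G ex0.
have u0 : v *m rho g0 != 0 by exact: rho_nz.
have pe0 : proj_eq x0 (v *m rho g0) by rewrite ex0; exact: pe_sym (norm_pe u0).
have x00 : x0 != 0 by rewrite ex0 norm_nz.
have Fx0 : forall k, k \in G -> normalize (x0 *m rho k) = x0 -> Fx (v *m rho g0) k.
  move=> k kG e; apply: Fx_pe pe0 _; apply: pe_sym; apply: norm_eq_pe => //.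
    exact: rho_nz.
  by rewrite e ex0 norm_norm.
have Fa := Fx0 a aG fx0.
have Fb := Fx0 b bG f'x0.
have Fall : forall k', k' \in [:: a; b; (a * b)%g] -> Fx (v *m rho g0) k'.
  move=> k'; rewrite !inE => /or3P [] /eqP ->; rewrite ?Fa ?Fb //.
  exact: Fx_mul.
move=> g gG.
have hG : (g0^-1 * g)%g \in G by rewrite groupM ?groupV.
have gen : forall k, k \in [:: a; b; (a * b)%g] -> Fx (v *m rho g) k.
  move=> k hk.
  have k'in := nrm _ (groupVr hG) k hk.
  have inL : forall k, k \in [:: a; b; (a * b)%g] -> k \in G.
    by move=> k0; rewrite !inE => /or3P [] /eqP ->; rewrite ?groupM.
  have kG := inL k hk.
  apply: (Fx_conj (k' := ((g0^-1 * g)^-1)^-1 * k * (g0^-1 * g)^-1)%g) g0G gG kG _ _ (Fall _ k'in).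
    exact: inL.
  set h := (g0^-1 * g)%g.
  by rewrite invgK -!mulgA mulVg mulg1 mulgA /h mulgV mul1g.
split; apply: gen; by rewrite !inE eqxx ?orbT.
Qed.

End Proj.

End Aux.
Import Aux.
Unset Implicit Arguments.
Import Num.Theory.

Theorem lemma4p2 (gT : finGroupType) (G : {group gT}) (rho : gT -> 'M[C]_3)
  (rho_unit : forall g, g \in G -> rho g \in unitmx)
  (rho_mul : forall g h, g \in G -> h \in G ->
     exists c : C, c != 0 /\ rho (g * h)%g = c *: (rho g *m rho h))
  (rho_inj : forall g, g \in G -> (exists c : C, rho g = c%:M) -> g = 1%g)
  (HG : (G \isog 'Sym_('I_4))%g \/ (G \isog 'Alt_('I_4))%g) :
  (exists v : 'rV[C]_3, v != 0 /\ forall g, g \in G -> proj_eq v (v *m rho g))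
  \/
  (forall v w : 'rV[C]_3, v != 0 -> w != 0 ->
     porbit_len G rho v = 3%N -> porbit_len G rho w = 3%N ->
     exists g, g \in G /\ proj_eq w (v *m rho g)).
Proof.
apply: or_intror. move=> v. move=> w. move=> v0 w0. move=> hv. move=> hw.
have [a [b [[aG bG a1 b1 anb] [[aa bb ab] nrm]]]] := klein HG.
have Fv := orbit3_fixed rho_unit rho_mul v0 hv aG bG aa bb ab nrm.
have Fw := orbit3_fixed rho_unit rho_mul w0 hw aG bG aa bb ab nrm.
have memv : forall p, p \in Defs.porbit G rho v ->
    [/\ p != 0, Fx rho p a, Fx rho p b & exists2 g, g \in G & proj_eq p (v *m rho g)].
  move=> p /(mem_porbit G rho) [g gG ->].
  have u0 : v *m rho g != 0 by exact: (rho_nz rho_unit gG v0).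
  have pe1 := pe_sym (norm_pe u0).
  have [F1 F2] := Fv g gG.
  split; first exact: norm_nz.
  - exact: Fx_pe (norm_pe u0) F1.
  - exact: Fx_pe (norm_pe u0) F2.
  by exists g.
have peq : forall p q, p \in Defs.porbit G rho v -> q \in Defs.porbit G rho v ->
    proj_eq p q -> p = q.
  move=> p q /(mem_porbit G rho) [g gG ->] /(mem_porbit G rho) [h hG ->] e.
  rewrite -norm_norm ?(rho_nz rho_unit) // -[RHS]norm_norm ?(rho_nz rho_unit) //; exact: pe_norm.
have wfix : Fx rho w a /\ Fx rho w b.
  have [F1 F2] := Fw 1%g (group1 G).
  by split; apply: Fx_pe (pe_sym (pe_rho1 rho_unit rho_mul w)) _.
have us : uniq (Defs.porbit G rho v) := undup_uniq _.
move: hv; rewrite /porbit_len.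
case E : (Defs.porbit G rho v) us memv peq => [|x1 [|x2 [|x3 [|]]]] // us memv peq _.
have m1 : x1 \in [:: x1; x2; x3] by rewrite !inE eqxx.
have m2 : x2 \in [:: x1; x2; x3] by rewrite !inE eqxx orbT.
have m3 : x3 \in [:: x1; x2; x3] by rewrite !inE eqxx !orbT.
have [n1 F1a F1b [g1 g1G p1]] := memv x1 m1.
have [n2 F2a F2b [g2 g2G p2]] := memv x2 m2.
have [n3 F3a F3b [g3 g3G p3]] := memv x3 m3.
have [F4a F4b] := wfix.
have hA2 : exists s, rho a *m rho a = s%:M.
  have [c [c0 e]] := rho_mul _ _ aG aG; have [d [d0 e1]] := rho1 rho_unit rho_mul.
  rewrite aa e1 in e; exists (c^-1 * d).
  by rewrite -scale_scalar_mx e scalerA mulVf // scale1r.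
have hB2 : exists s, rho b *m rho b = s%:M.
  have [c [c0 e]] := rho_mul _ _ bG bG; have [d [d0 e1]] := rho1 rho_unit rho_mul.
  rewrite bb e1 in e; exists (c^-1 * d).
  by rewrite -scale_scalar_mx e scalerA mulVf // scale1r.
have hcomm : exists c, rho a *m rho b = c *: (rho b *m rho a).
  have [c1 [c10 e1]] := rho_mul _ _ aG bG; have [c2 [c20 e2]] := rho_mul _ _ bG aG.
  rewrite ab in e1; exists (c1^-1 * c2).
  by rewrite -scalerA -e2 e1 scalerA mulVf // scale1r.
have nA : forall c, rho a != c%:M.
  by move=> c; apply/eqP => e; case/eqP: a1; apply: rho_inj _ aG _; exists c.
have nB : forall c, rho b != c%:M.
  by move=> c; apply/eqP => e; case/eqP: b1; apply: rho_inj _ bG _; exists c.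
have nAB : forall c, rho a *m rho b != c%:M.
  move=> c; apply/eqP => e; have [c1 [c10 e1]] := rho_mul _ _ aG bG.
  have h1 : (a * b = 1)%g.
    by apply: rho_inj _ (groupM aG bG) _; exists (c1 * c); rewrite e1 e scale_scalar_mx.
  case/eqP: anb; by rewrite -[a]mulg1 -bb mulgA h1 mul1g.
case: F1a => [al1 [_ e1a]]; case: F2a => [al2 [_ e2a]]; case: F3a => [al3 [_ e3a]]; case: F4a => [al4 [_ e4a]].
case: F1b => [be1 [_ e1b]]; case: F2b => [be2 [_ e2b]]; case: F3b => [be3 [_ e3b]]; case: F4b => [be4 [_ e4b]].
pose u := fun i : 'I_4 => nth 0 [:: x1; x2; x3; w] i.
have := @LAmain _ (rho a) (rho b) u (fun i => nth 0 [:: al1; al2; al3; al4] i)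
  (fun i => nth 0 [:: be1; be2; be3; be4] i) (rho_unit _ aG) (rho_unit _ bG) hA2 hB2 hcomm nA nB nAB.
case.
- by move=> i; case: (ord4P i) => ->.
- by move=> i; case: (ord4P i) => ->.
- by move=> i; case: (ord4P i) => ->.
move=> i [j [ij [c e]]].
have uj : u j != 0 by case: (ord4P j) => ->.
have c0 : c != 0 by apply: contraNneq uj => c0; rewrite e c0 scale0r.
have pij : proj_eq (u i) (u j) by exists c.
move: ij pij; rewrite /u.
case: (ord4P i) => ->; case: (ord4P j) => -> //= _ pij.
- by move: us; rewrite (peq _ _ m1 m2 pij) /= !inE !eqxx ?orbT ?andbF ?andFb.
- by move: us; rewrite (peq _ _ m1 m3 pij) /= !inE !eqxx ?orbT ?andbF ?andFb.
- by exists g1; split => //; apply: pe_trans (pe_sym pij) p1.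
- by move: us; rewrite (peq _ _ m2 m1 pij) /= !inE !eqxx ?orbT ?andbF ?andFb.
- by move: us; rewrite (peq _ _ m2 m3 pij) /= !inE !eqxx ?orbT ?andbF ?andFb.
- by exists g2; split => //; apply: pe_trans (pe_sym pij) p2.
- by move: us; rewrite (peq _ _ m3 m1 pij) /= !inE !eqxx ?orbT ?andbF ?andFb.
- by move: us; rewrite (peq _ _ m3 m2 pij) /= !inE !eqxx ?orbT ?andbF ?andFb.
- by exists g3; split => //; apply: pe_trans (pe_sym pij) p3.
- by exists g1; split => //; apply: pe_trans pij p1.
- by exists g2; split => //; apply: pe_trans pij p2.
- by exists g3; split => //; apply: pe_trans pij p3.
Qed.
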